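(* Let $n,m\in\mathbb Z$, $k\ge0$, and $a,b,q,p\in\mathbb C$ with $|p|<1$. Then \[ \binom{n+m}{k}_{a,b;q,p}=\sum_{j=0}^k\binom nj_{a,b;q,p}\binom{m}{k-j}_{aq^{2n-j},bq^{n+j};q,p}\prod_{i=1}^{k-j}W_{a,b;q,p}(i+j,n-j). \]
   Context: $\theta(x;p)=\prod_{j\ge0}(1-p^jx)(1-p^{j+1}/x)$, $\theta(x_1,\dots,x_\ell;p)=\prod_i\theta(x_i;p)$; parameters are such that denominators below do not vanish. Product convention: $\prod_{j=l}^mA_j=A_l\cdots A_m$ if $m>l-1$, $1$ if $m=l-1$, $A_{l-1}^{-1}\cdots A_{m+1}^{-1}$ if $m<l-1$. For parameters $(a,b)$: $w_{a,b;q,p}(s,t)=\frac{\theta(aq^{s+2t},bq^{2s+t-2},aq^{t-s-1}/b;p)}{\theta(aq^{s+2t-2},bq^{2s+t},aq^{t-s+1}/b;p)}q$, $W_{a,b;q,p}(s,t)=\prod_{j=1}^tw_{a,b;q,p}(s,j)=\frac{\theta(aq^{s+2t},bq^{2s},bq^{2s-1},aq^{1-s}/b,aq^{-s}/b;p)}{\theta(aq^s,bq^{2s+t},bq^{2s+t-1},aq^{1+t-s}/b,aq^{t-s}/b;p)}q^t$, and $\binom nk_{a,b;q,p}$ ($n,k\in\mathbb Z$) is the unique family with $\binom n0_{a,b;q,p}=\binom nn_{a,b;q,p}=1$ and $\binom{n+1}k_{a,b;q,p}=\binom nk_{a,b;q,p}+\binom n{k-1}_{a,b;q,p}W_{a,b;q,p}(k,n+1-k)$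 for $(n+1,k)\ne(0,0)$ (closed form $\frac{(q^{1+k},aq^{1+k},bq^{1+k},aq^{1-k}/b;q,p)_{n-k}}{(q,aq,bq^{1+2k},aq/b;q,p)_{n-k}}$ with $(x;q,p)_r=\prod_{i=0}^{r-1}\theta(xq^i;p)$). The coefficient $\binom{\cdot}{\cdot}_{aq^{2n-j},bq^{n+j};q,p}$ is this with $(a,b)$ replaced by $(aq^{2n-j},bq^{n+j})$. *)

(* Defs.v *)
From HB Require Import structures.
From mathcomp Require Import all_boot all_order all_algebra.
From mathcomp Require Import complex.
From mathcomp Require Import all_classical all_reals all_analysis.
Set Implicit Arguments. Unset Strict Implicit. Unset Printing Implicit Defensive.
Import Order.TTheory GRing.Theory Num.Theory.
Import numFieldTopology.Exports.
Local Open Scope ring_scope.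
Local Open Scope complex_scope.
Local Open Scope classical_set_scope.

(* The (metric) topology of the numClosedField R[i] (induced by the modulus). *)
HB.instance Definition _ (R : realType) :=
  PseudoPointedMetric.copy R[i] (R[i] : numClosedFieldType)^o.

Section Elliptic.
Variable R : realType.
Local Notation C := R[i].

Definition theta_partial (x p : C) (N : nat) : C :=
  \prod_(j < N) ((1 - p ^+ j * x) * (1 - p ^+ j.+1 / x)).

Definition theta (x p : C) : C := limn (theta_partial x p).

(* Product convention:  prod_{j=l}^m A_j  for integers l, m:
   A_l ... A_m if m > l-1; 1 if m = l-1; A_{l-1}^{-1} ... A_{m+1}^{-1} if m < l-1. *)
Definition sprod (l m : int) (A : int -> C) : C :=
  if (l - 1 <= m)%R then \prod_(i < absz (m - l + 1)%R) A (l + i%:Z)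
  else \prod_(i < absz (l - 1 - m)%R) (A (m + 1 + i%:Z))^-1.

(* The corresponding additive convention (used to telescope the recurrence):
   sum_{j=l}^m A_j = A_l + ... + A_m if m > l-1; 0 if m = l-1;
   -(A_{m+1} + ... + A_{l-1}) if m < l-1. *)
Definition ssum (l m : int) (A : int -> C) : C :=
  if (l - 1 <= m)%R then \sum_(i < absz (m - l + 1)%R) A (l + i%:Z)
  else - \sum_(i < absz (l - 1 - m)%R) A (m + 1 + i%:Z).

Definition ew (a b q p : C) (s t : int) : C :=
  (theta (a * q ^ (s + 2 * t)) p * theta (b * q ^ (2 * s + t - 2)) p
     * theta (a * q ^ (t - s - 1) / b) p)
  / (theta (a * q ^ (s + 2 * t - 2)) p * theta (b * q ^ (2 * s + t)) p
     * theta (a * q ^ (t - s + 1) / b) p) * q.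

Definition eW (a b q p : C) (s t : int) : C := sprod 1 t (fun j => ew a b q p s j).

(* The elliptic binomial coefficient binom(n,k)_{a,b;q,p} for n : int and k >= 0.
   It is the restriction to k >= 0 of the unique family with
   binom(n,0) = binom(n,n) = 1 and
   binom(n+1,k) = binom(n,k) + binom(n,k-1) W(k,n+1-k)  ((n+1,k) <> (0,0)).
   For k >= 1, the recurrence determines column k from column k-1 up to the
   normalisation binom(k,k) = 1, which gives (telescoping, with the above
   convention for signed sums)
     binom(n,k) = 1 + sum_{l=k}^{n-1} binom(l,k-1) W(k, l+1-k). *)
Fixpoint ebinom (a b q p : C) (n : int) (k : nat) : C :=
  match k with
  | 0%N => 1
  | k'.+1 => 1 + ssum k'.+1%:Z (n - 1)
                   (fun l => ebinom a b q p l k' * eW a b q p k'.+1%:Z (l - k'%:Z))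
  end.

End Elliptic.

(* Main.v *)
Require Import Defs.
From HB Require Import structures.
From mathcomp Require Import all_boot all_order all_algebra.
From mathcomp Require Import complex.
From mathcomp Require Import all_classical all_reals all_analysis.
From mathcomp Require Import zify ring.
Import Order.TTheory GRing.Theory Num.Theory.
Import numFieldTopology.Exports.
Local Open Scope ring_scope.
Local Open Scope complex_scope.
Section S.
Variable R : realType.
Local Notation C := R[i].
Implicit Types (A : int -> C).

Lemma natz_of (x : int) : 0 <= x -> exists N : nat, x = N%:Z.
Proof. move=> h; exists (absz x); lia. Qed.

Lemma sprod_recr l m A : (forall x, A x != 0) -> sprod l (m+1) A = sprod l m A * A (m+1).
Proof.
move=> nz; rewrite /sprod.
case: (lerP (l-1) m) => h.
- have h1 : l - 1 <= m + 1 by lia.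
  rewrite h1.
  have [N hN] : exists N : nat, m - l + 1 = N%:Z by apply: natz_of; lia.
  have -> : m + 1 - l + 1 = N.+1%:Z by lia.
  rewrite hN /= big_ord_recr /=; congr (_ * A _); lia.
case: (lerP (l-1) (m+1)) => h1.
- have -> : m + 1 - l + 1 = 0%:Z by lia.
  have -> : l - 1 - m = 1%:Z by lia.
  by rewrite /= big_ord0 big_ord1 addr0 mulVf.
have [N hN] : exists N : nat, l - 1 - (m + 1) = N%:Z by apply: natz_of; lia.
rewrite hN.
have -> : l - 1 - m = N.+1%:Z by lia.
rewrite /= big_ord_recl /= addr0 mulrC mulrA mulfV // mul1r.
apply: eq_bigr => i _; congr ((A _)^-1); rewrite /bump /=; lia.
Qed.

Lemma ssum_recr l m A : ssum l (m+1) A = ssum l m A + A (m+1).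
Proof.
rewrite /ssum.
case: (lerP (l-1) m) => h.
- have h1 : l - 1 <= m + 1 by lia.
  rewrite h1.
  have [N hN] : exists N : nat, m - l + 1 = N%:Z by apply: natz_of; lia.
  have -> : m + 1 - l + 1 = N.+1%:Z by lia.
  rewrite hN /= big_ord_recr /=; congr (_ + A _); lia.
case: (lerP (l-1) (m+1)) => h1.
- have -> : m + 1 - l + 1 = 0%:Z by lia.
  have -> : l - 1 - m = 1%:Z by lia.
  by rewrite /= big_ord0 big_ord1 addr0 addNr.
have [N hN] : exists N : nat, l - 1 - (m + 1) = N%:Z by apply: natz_of; lia.
rewrite hN.
have -> : l - 1 - m = N.+1%:Z by lia.
rewrite /= big_ord_recl /=.
have -> : A (m + 1 + (0%N)%:Z) = A (m+1) by congr (A _); lia.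
have H : forall x y : C, - (x + y) + x = - y by move=> x y; rewrite opprD addrAC addNr add0r.
rewrite H.
congr (- _); apply: eq_bigr => i _; congr (A _); rewrite /bump /=; lia.
Qed.

Lemma sprod_shift l m c A : sprod l m (fun x => A (x + c)) = sprod (l + c) (m + c) A.
Proof.
rewrite /sprod.
have -> : (l + c - 1 <= m + c) = (l - 1 <= m) by apply/idP/idP; lia.
have -> : m + c - (l + c) + 1 = m - l + 1 by lia.
have -> : l + c - 1 - (m + c) = l - 1 - m by lia.
case: ifP => _; apply: eq_bigr => i _; [congr (A _) | congr ((A _)^-1)]; lia.
Qed.

Lemma sprod_ext l m A B : (forall x, A x = B x) -> sprod l m A = sprod l m B.
Proof. by move=> e; rewrite /sprod; case: ifP => _; apply: eq_bigr => i _; rewrite e. Qed.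

Lemma sprod_empty x A : sprod (x + 1) x A = 1.
Proof.
rewrite /sprod; have h : x + 1 - 1 <= x by lia.
rewrite h; have -> : x - (x + 1) + 1 = 0%:Z by lia.
by rewrite big_ord0.
Qed.

Lemma sprod_cocycle l x y A : (forall z, A z != 0) ->
  sprod l x A * sprod (x + 1) y A = sprod l y A.
Proof.
move=> nz; have -> : y = x + (y - x) by lia.
move: (y - x) => d; elim/int_rec: d.
- by rewrite addr0 sprod_empty mulr1.
- move=> d IH; have -> : x + (d.+1)%:Z = (x + d) + 1 by lia.
  by rewrite !sprod_recr // mulrA IH.
- move=> d IH; have e : x + - (d%:Z) = (x + - (d.+1)%:Z) + 1 by lia.
  move: IH; rewrite e !sprod_recr // mulrA => IH.
  exact: (mulIf (nz _) IH).
Qed.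

Lemma qe1 (x q : C) e1 e2 e3 : q != 0 -> e1 + e2 = e3 -> x * q ^ e1 * q ^ e2 = x * q ^ e3.
Proof. by move=> hq <-; rewrite -mulrA -expfzDr. Qed.

Lemma qe2 (a b q : C) e1 e2 e3 e4 : q != 0 -> e1 + e2 - e3 = e4 ->
  a * q ^ e1 * q ^ e2 / (b * q ^ e3) = a * q ^ e4 / b.
Proof.
move=> hq <-; rewrite expfzDr // -invr_expz expfzDr // invfM; ring.
Qed.

Lemma ew_shift (a b q p : C) (n j s l : int) : q != 0 ->
  ew (a * q ^ (2 * n - j)) (b * q ^ (n + j)) q p s l = ew a b q p (s + j) (l + (n - j)).
Proof.
move=> hq; rewrite /ew.
congr (_ * _ * _ / (_ * _ * _) * _); congr (theta _ p).
all: first [ (apply: qe2; [exact: hq | lia]) | (apply: qe1; [exact: hq | lia]) ].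
Qed.

Lemma ew_neq0 (a b q p : C) s t : q != 0 ->
  (forall i : int, theta (a * q ^ i) p != 0) ->
  (forall i : int, theta (b * q ^ i) p != 0) ->
  (forall i : int, theta (a * q ^ i / b) p != 0) -> ew a b q p s t != 0.
Proof.
move=> hq ha hb hab; rewrite /ew.
by rewrite !mulf_neq0 ?invr_neq0 ?mulf_neq0.
Qed.

Lemma eW_key (a b q p : C) (n j s t : int) : q != 0 ->
  (forall i : int, theta (a * q ^ i) p != 0) ->
  (forall i : int, theta (b * q ^ i) p != 0) ->
  (forall i : int, theta (a * q ^ i / b) p != 0) ->
  eW (a * q ^ (2 * n - j)) (b * q ^ (n + j)) q p s t * eW a b q p (s + j) (n - j)
  = eW a b q p (s + j) (n - j + t).
Proof.
move=> hq ha hb hab; rewrite /eW.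
rewrite (sprod_ext _ _ _ (fun l => ew a b q p (s + j) (l + (n - j)))); last first.
  by move=> x; exact: ew_shift.
rewrite (sprod_shift _ _ _ (ew a b q p (s + j))) mulrC (addrC 1 (n - j)).
rewrite sprod_cocycle; last by move=> z; exact: ew_neq0.
by rewrite addrC.
Qed.

Lemma ebinom_rec (a b q p : C) (n : int) k :
  ebinom a b q p (n + 1) k.+1 =
  ebinom a b q p n k.+1 + ebinom a b q p n k * eW a b q p k.+1%:Z (n - k%:Z).
Proof.
rewrite /=.
have -> : n + 1 - 1 = (n - 1) + 1 by lia.
rewrite ssum_recr addrA.
by have -> : n - 1 + 1 = n by lia.
Qed.

Lemma ebinom_diag (a b q p : C) k : ebinom a b q p k%:Z k = 1.
Proof.
case: k => [//|k] /=; rewrite /ssum.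
rewrite lexx.
have -> : k.+1%:Z - 1 - k.+1%:Z + 1 = 0%:Z by lia.
by rewrite big_ord0 addr0.
Qed.

Lemma ebinom_low (a b q p : C) k : forall l : nat, (l <= k)%N ->
  ebinom a b q p l%:Z k = (l == k)%:R.
Proof.
elim: k => [|k IH] l.
  by rewrite leqn0 => /eqP -> .
suff H : forall d, (d <= k.+1)%N -> ebinom a b q p (k.+1 - d)%N%:Z k.+1 = (d == 0%N)%:R.
  move=> hl; have := H (k.+1 - l)%N (leq_subr _ _).
  by rewrite subKn // => ->; rewrite subn_eq0 eqn_leq hl.
elim=> [|d IHd] hd.
  by rewrite subn0 ebinom_diag.
have e : ((k.+1 - d)%N)%:Z = ((k - d)%N)%:Z + 1 by lia.
have := IHd (ltnW hd); rewrite e ebinom_rec (IH (k - d)%N); last by lia.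
rewrite subSS.
case: d IHd hd e => [|d] _ hd e.
- rewrite subn0 eqxx mul1r.
  have -> : k%:Z - k%:Z = 0 by lia.
  have -> : eW a b q p k.+1%:Z 0 = 1 by rewrite /eW; exact: (sprod_empty 0).
  move=> H; apply: (addIr 1); rewrite H; simpl; by rewrite add0r.
- have -> : ((k - d.+1)%N == k) = false by apply/eqP; lia.
  by rewrite mul0r addr0 => ->.
Qed.

Lemma ebinom0 (a b q p : C) r : ebinom a b q p 0 r.+1 = 0.
Proof. exact: (ebinom_low a b q p r.+1 0). Qed.

Lemma sum_recr (G : nat -> C) k :
  \sum_(0 <= i < k.+1) G i = \sum_(0 <= i < k) G i + G k.
Proof. by rewrite big_nat_recr. Qed.

Lemma prod_recr1 (G : nat -> C) s :
  \prod_(1 <= i < s.+2) G i = (\prod_(1 <= i < s.+1) G i) * G s.+1.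
Proof. by rewrite big_nat_recr. Qed.

End S.

Theorem corollary4 (R : realType) (n m : int) (k : nat) (a b q p : R[i])
  (hp : `|p| < 1)
  (ha : a != 0) (hb : b != 0) (hq : q != 0)
  (hta : forall i : int, theta (a * q ^ i) p != 0)
  (htb : forall i : int, theta (b * q ^ i) p != 0)
  (htab : forall i : int, theta (a * q ^ i / b) p != 0) :
  ebinom a b q p (n + m) k =
  \sum_(j < k.+1)
     ebinom a b q p n j
     * ebinom (a * q ^ (2 * n - j%:Z)) (b * q ^ (n + j%:Z)) q p m (k - j)
     * \prod_(1 <= i < (k - j).+1) eW a b q p (i + j)%:Z (n - j%:Z).
Proof.
pose Bp (i : nat) := ebinom (a * q ^ (2 * n - i%:Z)) (b * q ^ (n + i%:Z)) q p.
pose P (i s : nat) := \prod_(1 <= i0 < s.+1) eW a b q p (i0 + i)%:Z (n - i%:Z).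
pose T (x : int) (kk : nat) (i : nat) := ebinom a b q p n i * Bp i x (kk - i)%N * P i (kk - i)%N.
pose F (x : int) (kk : nat) := \sum_(0 <= j < kk.+1) T x kk j.
have e0 : forall (a b x : R[i]) (y : int), ebinom a b x p y 0 = 1 by [].
suff H : forall kk x, ebinom a b q p (n + x) kk = F x kk.
  by rewrite H /F big_mkord.
clear k.
clear m; elim=> [|k IH] x.
  by rewrite /F big_nat1 /T /P big_geq // !mulr1.
have step : forall x, F (x + 1) k.+1 = F x k.+1 + F x k * eW a b q p k.+1%:Z (n + x - k%:Z).
  move=> y; rewrite /F sum_recr [X in _ = X + _]sum_recr.
  have L : T (y + 1) k.+1 k.+1 = T y k.+1 k.+1 by rewrite /T subnn.
  have E : forall i, (0 <= i < k.+1)%N -> T (y + 1) k.+1 i =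
      T y k.+1 i + T y k i * eW a b q p k.+1%:Z (n + y - k%:Z).
    move=> i /andP[_ hi]; have hik : (i <= k)%N by rewrite -ltnS.
    rewrite /T /Bp /P (subSn hik) ebinom_rec prod_recr1.
    have K := @eW_key R a b q p n i%:Z ((k-i)%N.+1)%:Z (y - (k-i)%N%:Z) hq hta htb htab.
    rewrite -PoszD in K.
    have K' : eW (a * q ^ (2 * n - i%:Z)) (b * q ^ (n + i%:Z)) q p ((k - i)%N.+1)%:Z (y - (k-i)%N%:Z)
       * eW a b q p ((k - i).+1 + i)%N%:Z (n - i%:Z) = eW a b q p k.+1%:Z (n + y - k%:Z).
      by rewrite K; congr eW; lia.
    rewrite -K'; ring.
  rewrite (eq_big_nat _ _ E) big_split -big_distrl /= L; ring.
have base : F 0 k.+1 = ebinom a b q p n k.+1.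
  rewrite /F sum_recr.
  have Z : \sum_(0 <= j < k.+1) T 0 k.+1 j = 0.
    rewrite big_nat_cond big1 // => i /andP[/andP[_ hi] _].
    have hik : (i <= k)%N by rewrite -ltnS.
    by rewrite /T /Bp (subSn hik) ebinom0 mulr0 mul0r.
  by rewrite Z add0r /T subnn /P big_geq // mulr1 /Bp e0 mulr1.
have S : forall y, ebinom a b q p (n + y) k.+1 - F y k.+1
    = ebinom a b q p (n + (y + 1)) k.+1 - F (y + 1) k.+1.
  move=> y; rewrite step addrA ebinom_rec IH; ring.
suff Z : forall y, ebinom a b q p (n + y) k.+1 - F y k.+1 = 0.
  by apply/eqP; rewrite -subr_eq0 Z.
elim/int_rec.
- by rewrite addr0 base subrr.
- move=> y IHy; have -> : (y.+1)%:Z = y%:Z + 1 by lia.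
  by rewrite -S.
- move=> y IHy; rewrite S.
  by have -> : - (y.+1)%:Z + 1 = - y%:Z by lia.
Qed.
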